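(* Let $G$ be a two-player stage game and let $I=\{(i,j)\in A_1\times A_2: u_2(i,j)=\max_{j'\in A_2}u_2(i,j')\}$. Suppose that (1) $|V_1^{m,m}|>1$ and $|V_2^{m,m}|=1$; (2) there do not exist $\hat a_1\in A_1$, $\hat\sigma_2\in\Delta A_2$, $a_1'\in A_1$ with $u_1(\hat a_1,\hat\sigma_2)<u_1(a_1',\hat\sigma_2)$ and $\hat\sigma_2$ a best response to $\hat a_1$; (3) there do not exist $a_1\in A_1$ and $a_2,a_2'\in A_2$ with $a_2\ne a_2'$ such that both $a_2$ and $a_2'$ are best responses to $a_1$. Then: (a) $I\subseteq\mathrm{Nash}^{m,m}(G)$; (b) for each $i\in A_1$ there is a unique $j\in A_2$ with $(i,j)\in I$; (c) there exists $b\in\mathbb{R}$ such that $u_2(i,j)=b$ for all $(i,j)\in I$ and $u_2(i',j')<b$ for all $(i',j')\in(A_1\times A_2)\setminus I$; (d) there exist $(i,j),(i',j')\in I$ with $u_1(i,j)\ne u_1(i',j')$, $i\ne i'$ and $j\ne j'$.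
   Context: A two-player stage game $G$ consists of finite nonempty action sets $A_1,A_2$ and payoff functions $u_1,u_2:A_1\times A_2\to\mathbb{R}$, extended to mixed strategies $\sigma_i\in\Delta A_i$ by expectation. A (mixed) strategy is a best response to the opponent's strategy if it maximizes expected payoff against it. $\mathrm{Nash}^{m,m}(G)$ is the set of mixed-strategy Nash equilibria of $G$ (pure profiles viewed as degenerate mixed profiles), and $V_i^{m,m}=\{u_i(\sigma):\sigma\in\mathrm{Nash}^{m,m}(G)\}$. *)

(* Defs.v *)
From HB Require Import structures.
From mathcomp Require Import all_boot all_order all_algebra.
Set Implicit Arguments. Unset Strict Implicit. Unset Printing Implicit Defensive.
Import Order.TTheory GRing.Theory Num.Theory.
Local Open Scope ring_scope.

Section Games.
Variables (R : realFieldType) (A1 A2 : finType).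

Definition mixed (A : finType) (s : {ffun A -> R}) : Prop :=
  (forall a, 0 <= s a) /\ \sum_(a : A) s a = 1.

Definition pure (A : finType) (a : A) : {ffun A -> R} := [ffun x => (x == a)%:R].

Definition expay (u : A1 -> A2 -> R) (s1 : {ffun A1 -> R}) (s2 : {ffun A2 -> R}) : R :=
  \sum_(a1 : A1) \sum_(a2 : A2) s1 a1 * s2 a2 * u a1 a2.

Definition best_resp1 (u1 : A1 -> A2 -> R) (s1 : {ffun A1 -> R}) (s2 : {ffun A2 -> R}) : Prop :=
  mixed s1 /\ forall t1, mixed t1 -> expay u1 t1 s2 <= expay u1 s1 s2.

Definition best_resp2 (u2 : A1 -> A2 -> R) (s1 : {ffun A1 -> R}) (s2 : {ffun A2 -> R}) : Prop :=
  mixed s2 /\ forall t2, mixed t2 -> expay u2 s1 t2 <= expay u2 s1 s2.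

Definition nash (u1 u2 : A1 -> A2 -> R) (s1 : {ffun A1 -> R}) (s2 : {ffun A2 -> R}) : Prop :=
  mixed s1 /\ mixed s2 /\ best_resp1 u1 s1 s2 /\ best_resp2 u2 s1 s2.

Definition Iset (u2 : A1 -> A2 -> R) (i : A1) (j : A2) : Prop :=
  forall j', u2 i j' <= u2 i j.

End Games.

(* Main.v *)
Require Import Defs.
From mathcomp Require Import all_boot all_order all_algebra.
Import Order.TTheory GRing.Theory Num.Theory.
Local Open Scope ring_scope.

Set Implicit Arguments.
Section H.
Variables (R : realFieldType) (A1 A2 : finType).
Implicit Types (u : A1 -> A2 -> R).

Lemma expay_pl u i (s2 : {ffun A2 -> R}) :
  expay u (pure R i) s2 = \sum_a2 s2 a2 * u i a2.
Proof.
rewrite /expay (bigD1 i) //= [X in _ + X]big1 ?addr0.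
  by apply: eq_bigr => a _; rewrite ffunE eqxx mul1r.
move=> a /negbTE nai; apply: big1 => b _; by rewrite ffunE nai !mul0r.
Qed.

Lemma expay_sum u (t1 : {ffun A1 -> R}) s2 :
  expay u t1 s2 = \sum_a1 t1 a1 * expay u (pure R a1) s2.
Proof.
rewrite {1}/expay; apply: eq_bigr => a _; rewrite expay_pl mulr_sumr.
by apply: eq_bigr => b _; rewrite mulrA.
Qed.

Lemma expay_pp u i j : expay u (pure R i) (pure R j) = u i j.
Proof.
rewrite expay_pl (bigD1 j) //= big1 ?addr0; first by rewrite ffunE eqxx mul1r.
by move=> b /negbTE nb; rewrite ffunE nb mul0r.
Qed.

Lemma mixed_pure (A : finType) (a : A) : mixed (pure R a).
Proof.
split => [x|]; first by rewrite ffunE ler0n.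
rewrite (bigD1 a) //= ffunE eqxx big1 ?addr0 // => b /negbTE nb.
by rewrite ffunE nb.
Qed.
Arguments mixed_pure {A} a.

Lemma mixed_le (A : finType) (t : {ffun A -> R}) (x : A -> R) M :
  mixed t -> (forall a, x a <= M) -> \sum_a t a * x a <= M.
Proof.
case=> t0 t1 xM; apply: (@le_trans _ _ (\sum_a t a * M)).
  by apply: ler_sum => a _; apply: ler_wpM2l.
by rewrite -mulr_suml t1 mul1r.
Qed.

Lemma br2_pp u i j : best_resp2 u (pure R i) (pure R j) <-> Iset u i j.
Proof.
split.
  by case=> _ H j'; have := H _ (mixed_pure j'); rewrite !expay_pp.
move=> Hi; split; first exact: mixed_pure.
by move=> t2 mt2; rewrite expay_pl expay_pp; exact: mixed_le.
Qed.

Lemma br1_pure u i s2 :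
  (forall a, expay u (pure R a) s2 <= expay u (pure R i) s2) ->
  best_resp1 u (pure R i) s2.
Proof.
move=> H; split; first exact: mixed_pure.
by move=> t1 mt1; rewrite (expay_sum u t1); exact: mixed_le.
Qed.

Lemma argmax_ex u (a0 : A2) i : exists j, Iset u i j.
Proof.
case: (@arg_maxP _ _ _ a0 predT (u i) isT) => j _ Hj.
by exists j => j'; apply: Hj.
Qed.


Lemma key (u1 u2 : A1 -> A2 -> R) (v : R) :
  (forall s1 s2, nash u1 u2 s1 s2 -> expay u2 s1 s2 = v) ->
  (forall i j, Iset u2 i j -> nash u1 u2 (pure R i) (pure R j)) ->
  (forall i j j', Iset u2 i j -> Iset u2 i j' -> j = j') ->
  (forall i, exists j, Iset u2 i j) ->
  forall s1 s2, nash u1 u2 s1 s2 ->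
  exists i j, Iset u2 i j /\ expay u1 s1 s2 = u1 i j.
Proof.
move=> Hv Na uniq ex s1 s2 N; have N' := N.
case: N' => [ms1 [ms2 [br1 br2]]].
have ub : forall i j, u2 i j <= v.
  move=> i j; case: (ex i) => j' Ij'.
  by rewrite -(Hv _ _ (Na _ _ Ij')) expay_pp; exact: Ij'.
have ev : \sum_i \sum_j s1 i * s2 j * v = v.
  under eq_bigr => i _ do rewrite -mulr_suml -mulr_sumr ms2.2 mulr1.
  by rewrite -mulr_suml ms1.2 mul1r.
have sum0 : \sum_i \sum_j s1 i * s2 j * (v - u2 i j) = 0.
  transitivity (\sum_i \sum_j s1 i * s2 j * v - expay u2 s1 s2); last first.
    by rewrite ev (Hv _ _ N) subrr.
  rewrite /expay -sumrB; apply: eq_bigr => i _; rewrite -sumrB.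
  by apply: eq_bigr => j _; rewrite mulrBr.
have term0 : forall i j, s1 i * s2 j * (v - u2 i j) = 0.
  move=> i j.
  have inner : \sum_j s1 i * s2 j * (v - u2 i j) = 0.
    apply: (psumr_eq0P _ sum0) => // k _; apply: sumr_ge0 => l _.
    apply: mulr_ge0; first exact: mulr_ge0 (ms1.1 k) (ms2.1 l).
    by rewrite subr_ge0.
  apply: (psumr_eq0P _ inner) => // k _.
  apply: mulr_ge0; first exact: mulr_ge0 (ms1.1 i) (ms2.1 k).
  by rewrite subr_ge0.
have pos : forall i j, 0 < s1 i -> 0 < s2 j -> Iset u2 i j.
  move=> i j p1 p2 j'; have /eqP := term0 i j.
  rewrite mulf_eq0 (gt_eqF (mulr_gt0 p1 p2)) /= subr_eq0 => /eqP <-.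
  exact: ub.
case: (pickP (fun i => 0 < s1 i)) => [i0 p0 | none]; last first.
  exfalso.
  have : \sum_i s1 i = 0.
    apply: big1 => i _; have := ms1.1 i.
    by rewrite le_eqVlt (none i) orbF => /eqP <-.
  by rewrite ms1.2 => /eqP; rewrite oner_eq0.
case: (ex i0) => j0 I0.
have z : forall j, j != j0 -> s2 j = 0.
  move=> j nj; have := ms2.1 j; rewrite le_eqVlt => /orP[/eqP <- //| p].
  by rewrite (uniq _ _ _ (pos _ _ p0 p) I0) eqxx in nj.
have s2p : s2 = pure R j0.
  apply/ffunP => j; rewrite ffunE; case: eqP => [->|nj]; last first.
    by apply: z; apply/eqP.
  have e1 := ms2.2; rewrite (bigD1 j0) //= big1 ?addr0 in e1; first exact: e1.
  by move=> k /z.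
subst s2; exists i0, j0; split => //.
case: (Na _ _ I0) => _ [_ [[_ b0] _]].
apply: le_anti; rewrite -{1}(expay_pp u1 i0 j0) (b0 _ ms1) /=.
by rewrite -(expay_pp u1 i0 j0); apply: br1.2; exact: mixed_pure.
Qed.

End H.
Unset Implicit Arguments.

Theorem mainTheorem3 (R : realFieldType) (A1 A2 : finType)
  (a1_0 : A1) (a2_0 : A2) (u1 u2 : A1 -> A2 -> R) :
  (* (1) |V_1| > 1 *)
  (exists s1 s2 t1 t2, nash u1 u2 s1 s2 /\ nash u1 u2 t1 t2 /\
      expay u1 s1 s2 <> expay u1 t1 t2) ->
  (* (1) |V_2| = 1 *)
  (exists v : R, (exists s1 s2, nash u1 u2 s1 s2 /\ expay u2 s1 s2 = v) /\
      forall s1 s2, nash u1 u2 s1 s2 -> expay u2 s1 s2 = v) ->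
  (* (2) *)
  ~ (exists (ha1 : A1) (hs2 : {ffun A2 -> R}) (a1' : A1),
        expay u1 (pure R ha1) hs2 < expay u1 (pure R a1') hs2 /\
        best_resp2 u2 (pure R ha1) hs2) ->
  (* (3) *)
  ~ (exists (a1 : A1) (a2 a2' : A2), a2 <> a2' /\
        best_resp2 u2 (pure R a1) (pure R a2) /\
        best_resp2 u2 (pure R a1) (pure R a2')) ->
  (* (a) *)
  (forall i j, Iset u2 i j -> nash u1 u2 (pure R i) (pure R j)) /\
  (* (b) *)
  (forall i, exists! j, Iset u2 i j) /\
  (* (c) *)
  (exists b : R, (forall i j, Iset u2 i j -> u2 i j = b) /\
      (forall i' j', ~ Iset u2 i' j' -> u2 i' j' < b)) /\
  (* (d) *)
  (exists i j i' j', Iset u2 i j /\ Iset u2 i' j' /\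
      u1 i j <> u1 i' j' /\ i <> i' /\ j <> j').
Proof.
move=> [s1 [s2 [t1 [t2 [Ns [Nt Hne]]]]]] [v [_ Hv]] H2 H3.
have Na : forall i j, Iset u2 i j -> nash u1 u2 (pure R i) (pure R j).
  move=> i j Iij; have B2 : best_resp2 u2 (pure R i) (pure R j) by apply/br2_pp.
  split; first exact: mixed_pure. split; first exact: mixed_pure.
  split => //; apply: br1_pure => a; rewrite leNgt; apply/negP => lt.
  by apply: H2; exists i, (pure R j), a.
have uniq : forall i j j', Iset u2 i j -> Iset u2 i j' -> j = j'.
  move=> i j j' Ij Ij'; case: (eqVneq j j') => // ne; exfalso.
  apply: H3; exists i, j, j'; split; first exact/eqP.
  by split; apply/br2_pp.
have ex : forall i, exists j, Iset u2 i j := fun i => @argmax_ex _ _ _ u2 a2_0 i.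
split => //; split.
  move=> i; case: (ex i) => j Ij; exists j; split => // j' Ij'; exact: uniq Ij Ij'.
split.
  exists v; split.
    by move=> i j Iij; rewrite -(@expay_pp _ _ _ u2 i j); apply: Hv; apply: Na.
  move=> i' j' nI; case: (ex i') => js Is.
  have -> : v = u2 i' js by rewrite -(Hv _ _ (Na _ _ Is)) expay_pp.
  rewrite lt_neqAle (Is j') andbT; apply/eqP => e; apply: nI => j''.
  by rewrite e; exact: Is.
have [i [j [Iij e1]]] := @key _ _ _ _ _ _ Hv Na uniq ex _ _ Ns.
have [i' [j' [Iij' e2]]] := @key _ _ _ _ _ _ Hv Na uniq ex _ _ Nt.
exists i, j, i', j'; split => //; split => //.
have ne : u1 i j <> u1 i' j' by rewrite -e1 -e2.
split => //; split.
  move=> ei; subst i'; have ej := uniq _ _ _ Iij Iij'; subst j'; exact: ne.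
move=> ej; subst j'; apply: ne; apply: le_anti.
case: (Na _ _ Iij) => _ [_ [[_ b] _]]; case: (Na _ _ Iij') => _ [_ [[_ b'] _]].
have := b _ (mixed_pure _ _ i'); have := b' _ (mixed_pure _ _ i); rewrite !expay_pp.
by move=> -> ->.
Qed.
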